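(* For any traversal sequence $\tau$, metric $d$, and sequence of tasks $w^1,\dots,w^n$, let $C^{A2}$ be the total cost (processing plus transition cost) of the ''follow the traversal'' algorithm and $C^T$ the total cost (processing plus transition cost) of the fractional traversal algorithm on that task sequence. Then $C^{A2}\le 2\,C^T$.
   Context: A metrical task system has states $S=\{1,\dots,m\}$ and a symmetric non-negative matrix $(d_{st})$ with $d_{ss}=0$ satisfying the triangle inequality. A task is a vector $w\in\mathbb{R}_{\ge0}^m$. A traversal sequence is an infinite sequence $\tau=\tau_1,\tau_2,\dots$ of states. Write $\delta_{\ell,\ell'}=\delta_{\ell',\ell}=\sum_{j=\min(\ell,\ell')}^{\max(\ell,\ell')-1}d_{\tau_j\tau_{j+1}}$. Fractional traversal algorithm (FTA) on $\tau$: it keeps a position $j$ (initially $t_0=1$) and the work $\rho$ done at the current position since arriving (initially $0$). On a task $w$, with remaining fraction $f=1$, it repeats while $f>0$: $\lambda\gets\min\{(d_{\tau_j\tau_{j+1}}-\rho)/w_{\tau_j},f\}$ (interpreted as $f$ if $w_{\tau_j}=0$), $\rho\gets\rho+\lambda w_{\tau_j}$ (work done in state $\tau_j$), $f\gets f-\lambda$, and if $\rho=d_{\tau_j\tau_{j+1}}$ then $j\gets j+1,\rho\gets0$. Let $t_i$ be its position after task $i$. Its processing cost is the total work done and its transition cost is $\delta_{t_0,t_n}$. ''Follow the traversal'' algorithm: keeps a position $\ell_i$ in $\tau$, with $\ell_0=1$, and is run alongside the FTA on the same tasks. Given task $w^i$, let $j_{\min}=\min(\ell_{i-1},t_{i-1})$,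 $j_{\max}=\max(\ell_{i-1},t_{i-1})$, $D_0=\{j_{\min},\dots,j_{\max}\}$, and $\tilde c(j)=w^i_{\tau_j}$ if $j\in D_0$, $\tilde c(j)=w^i_{\tau_j}+\delta_{j_{\max},j}$ if $j>j_{\max}$, $\tilde c(j)=\infty$ otherwise. It sets $\ell_i\in\arg\min_{j\ge j_{\min}}\tilde c(j)$ (ties broken arbitrarily), moves to state $\tau_{\ell_i}$ and processes the whole task there, incurring cost $d_{\tau_{\ell_{i-1}}\tau_{\ell_i}}+w^i_{\tau_{\ell_i}}$. *)

(* Defs.v *)
From HB Require Import structures.
From mathcomp Require Import all_boot all_order all_algebra.
Set Implicit Arguments. Unset Strict Implicit. Unset Printing Implicit Defensive.
Import Order.TTheory GRing.Theory Num.Theory.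
Local Open Scope ring_scope.

Section MTS.
Variable (R : realFieldType) (m : nat).
(* states are 'I_m, d the metric, tau the traversal sequence (positions 1,2,...;
   tau 0 is never used) *)
Variable (d : 'I_m -> 'I_m -> R) (tau : nat -> 'I_m).

Definition is_metric : Prop :=
  [/\ forall s t, 0 <= d s t, forall s, d s s = 0, forall s t, d s t = d t s
    & forall s t u, d s u <= d s t + d t u].

Definition edge (j : nat) : R := d (tau j) (tau j.+1).

Definition delta (l l' : nat) : R :=
  \sum_(minn l l' <= j < maxn l l') edge j.

Definition task := 'I_m -> R.

(* One execution of the inner "while f > 0" loop of the FTA on task w.
   fta_loop w j rho f c j' rho' : starting at position j with accumulated work
   rho and remaining fraction f, the loop terminates at position j' with work
   rho', having done total work c. *)
Inductive fta_loop (w : task) : nat -> R -> R -> R -> nat -> R -> Prop :=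
| fta_stop j rho f : ~~ (0 < f) -> fta_loop w j rho f 0 j rho
| fta_step j rho f c j' rho' :
    0 < f ->
    let lam := if w (tau j) == 0 then f
               else Num.min ((edge j - rho) / w (tau j)) f in
    let rho1 := rho + lam * w (tau j) in
    let f1 := f - lam in
    fta_loop w (if rho1 == edge j then j.+1 else j)
               (if rho1 == edge j then 0 else rho1) f1 c j' rho' ->
    fta_loop w j rho f (lam * w (tau j) + c) j' rho'.

(* FTA run on a sequence of tasks: fta_run j rho ws ts P means that, starting
   in configuration (j, rho), processing ws yields the successive positions ts
   (t_1, ..., t_n) and total processing cost P. *)
Inductive fta_run : nat -> R -> seq task -> seq nat -> R -> Prop :=
| fta_nil j rho : fta_run j rho [::] [::] 0
| fta_cons j rho w ws c j1 rho1 ts P :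
    fta_loop w j rho 1 c j1 rho1 ->
    fta_run j1 rho1 ws ts P ->
    fta_run j rho (w :: ws) (j1 :: ts) (c + P).

Definition tpos (ts : seq nat) (i : nat) : nat :=
  if i is i'.+1 then nth 0%N ts i' else 1%N.

(* the modified cost \tilde c(j) for j >= jmin (it is +oo for j < jmin) *)
Definition ctilde (w : task) (jmin jmax j : nat) : R :=
  if (j <= jmax)%N then w (tau j) else w (tau j) + delta jmax j.

(* l is a valid choice of "follow the traversal" for task w given previous
   positions lprev (its own) and tprev (FTA's): l is an argmin of ctilde
   over j >= jmin. *)
Definition ftt_choice (w : task) (lprev tprev l : nat) : Prop :=
  let jmin := minn lprev tprev in
  let jmax := maxn lprev tprev in
  (jmin <= l)%N /\
  forall j, (jmin <= j)%N -> ctilde w jmin jmax l <= ctilde w jmin jmax j.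

Definition ftt_cost (ws : seq task) (l : nat -> nat) : R :=
  \sum_(i < size ws) (d (tau (l i)) (tau (l i.+1)) + (nth (fun _ => 0) ws i) (tau (l i.+1))).

End MTS.

(* Main.v *)
Require Import Defs.
From HB Require Import structures.
From mathcomp Require Import all_boot all_order all_algebra.
From mathcomp Require Import lra ring zify.
Import Order.TTheory GRing.Theory Num.Theory.
Local Open Scope ring_scope.

Section Proof.
Variables (R : realFieldType) (m : nat) (d : 'I_m -> 'I_m -> R) (tau : nat -> 'I_m).
Hypothesis Hm : is_metric d.

Definition X (k : nat) : R := \sum_(0 <= j < k) edge d tau j.

Lemma edge_ge0 j : 0 <= edge d tau j.
Proof. by case: Hm => H0 _ _ _; apply: H0. Qed.

Lemma X_mono i j : (i <= j)%N -> X i <= X j.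
Proof.
move=> hij; rewrite /X (big_cat_nat (leq0n i) hij) /= lerDl.
by apply: sumr_ge0 => k _; apply: edge_ge0.
Qed.

Lemma deltaE i j : (i <= j)%N -> delta d tau i j = X j - X i.
Proof.
move=> hij; rewrite /delta (minn_idPl hij) (maxn_idPr hij) /X.
by rewrite (big_cat_nat (leq0n i) hij) /= addrC addrK.
Qed.

Lemma deltaC i j : delta d tau i j = delta d tau j i.
Proof. by rewrite /delta minnC maxnC. Qed.

Lemma dcase i j : ((i <= j)%N /\ delta d tau i j = X j - X i /\ X i <= X j) \/
                  ((j < i)%N /\ delta d tau i j = X i - X j /\ X j <= X i).
Proof.
case: (leqP i j) => h.
  by left; split => //; split; [apply: deltaE | apply: X_mono].
right; split => //; split; last by apply: X_mono; apply: ltnW.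
by rewrite deltaC deltaE // ltnW.
Qed.

Lemma d_le_delta i j : d (tau i) (tau j) <= delta d tau i j.
Proof.
case: Hm => H0 H1 H2 H3.
wlog hij : i j / (i <= j)%N.
  move=> W; case: (leqP i j) => h; first exact: W.
  by rewrite H2 deltaC; apply: W; apply: ltnW.
rewrite deltaE //; elim: j hij => [|j IH]; first by rewrite leqn0 => /eqP->; rewrite H1 subrr.
rewrite leq_eqVlt => /orP[/eqP->|]; first by rewrite H1 subrr.
rewrite ltnS => /IH h; apply: (le_trans (H3 _ (tau j) _)).
have -> : X j.+1 = X j + edge d tau j by rewrite /X big_nat_recr.
rewrite /edge in h *. lra.
Qed.

Lemma loop_prop (w : task R m) j rho f c j' rho' :
  fta_loop d tau w j rho f c j' rho' ->
  (forall s, 0 <= w s) -> 0 <= f -> 0 <= rho <= edge d tau j ->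
  [/\ (j <= j')%N, 0 <= rho' <= edge d tau j' &
    forall z K, (forall k, (j <= k <= j')%N -> z <= w (tau k) + K) -> f * z <= c + f * K].
Proof.
elim=> {j rho f c j' rho'}.
  move=> j rho f hf hw f0 hr; split => //.
  have -> : f = 0 by apply/eqP; rewrite eq_le f0 andbT leNgt.
  by move=> z K _; rewrite !mul0r add0r.
move=> j rho f c j' rho' fpos lam rho1 f1 _ IH hw f0 hr.
have [hl0 hlf hlw] : [/\ 0 <= lam, lam <= f & lam * w (tau j) <= edge d tau j - rho].
  rewrite /lam; case: eqP => [->|/eqP hn].
    by rewrite mulr0 subr_ge0 f0 le_refl; case/andP: hr.
  have wpos : 0 < w (tau j) by rewrite lt_def hn hw.
  have ep : 0 <= (edge d tau j - rho) / w (tau j).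
    by apply: divr_ge0; [rewrite subr_ge0; case/andP: hr | apply: ltW].
  split.
  - by rewrite le_min ep f0.
  - by rewrite ge_min le_refl orbT.
  - apply: (le_trans (y := (edge d tau j - rho) / w (tau j) * w (tau j))).
      by apply: ler_wpM2r; [apply: ltW | rewrite ge_min le_refl].
    by rewrite divfK // gt_eqF.
have hr1 : 0 <= rho1 <= edge d tau j.
  case/andP: hr => r0 r1; rewrite /rho1.
  have : 0 <= lam * w (tau j) by apply: mulr_ge0.
  move=> h; apply/andP; split; lra.
have f10 : 0 <= f1 by rewrite /f1 subr_ge0.
have hj2 : (j <= (if rho1 == edge d tau j then j.+1 else j))%N by case: ifP.
have hr2 : 0 <= (if rho1 == edge d tau j then 0 else rho1) <=
    edge d tau (if rho1 == edge d tau j then j.+1 else j).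
  by case: ifP => // _; rewrite le_refl edge_ge0.
case: (IH hw f10 hr2) => h1 h2 h3; split => //; first exact: leq_trans h1.
move=> z K hz.
have hzj : z <= w (tau j) + K by apply: hz; rewrite leqnn (leq_trans hj2 h1).
have hz2 : forall k, ((if rho1 == edge d tau j then j.+1 else j) <= k <= j')%N ->
    z <= w (tau k) + K.
  by move=> k /andP[a b]; apply: hz; rewrite (leq_trans hj2 a) b.
have := h3 z K hz2.
have hlz : lam * z <= lam * (w (tau j) + K) by apply: ler_wpM2l.
rewrite /f1 !mulrBl mulrDr in hlz *.
move=> H; lra.
Qed.

Lemma delta_ge0 i j : 0 <= delta d tau i j.
Proof. by apply: sumr_ge0 => k _; apply: edge_ge0. Qed.

Ltac dc i j := let h1 := fresh "o" in let h2 := fresh "e" in let h3 := fresh "x" in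
  case: (dcase i j) => [[h1 [h2 h3]]|[h1 [h2 h3]]].

Ltac kn h := let e := fresh "e" in let x := fresh "x" in
  have e := deltaE _ _ h; have x := X_mono _ _ h.

Lemma step (w : task R m) a b t' l c :
  (forall s, 0 <= w s) -> (b <= t')%N ->
  (forall z K, (forall k, (b <= k <= t')%N -> z <= w (tau k) + K) -> z <= c + K) ->
  ftt_choice d tau w a b l ->
  d (tau a) (tau l) + w (tau l) + delta d tau l t' <=
    delta d tau a b + 2 * (c + delta d tau b t').
Proof.
move=> hw hbt hloop; rewrite /ftt_choice /=; case=> hl hmin.
have c0 : 0 <= c by rewrite -[c]addr0; apply: hloop => k _; rewrite addr0.
have hzc : ctilde d tau w (minn a b) (maxn a b) l <=
    c + (if (maxn a b <= t')%N then delta d tau (maxn a b) t' else 0).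
  apply: hloop => k /andP[hbk hkt].
  apply: (le_trans (hmin k _)); first exact: leq_trans (geq_minr a b) hbk.
  rewrite /ctilde; case: ifP => hk.
    by rewrite lerDl; case: ifP => _; rewrite ?delta_ge0.
  have hjt : (maxn a b <= t')%N by apply: leq_trans hkt; apply: ltnW; rewrite ltnNge hk.
  rewrite hjt lerD2l !deltaE //; last by apply: ltnW; rewrite ltnNge hk.
  by rewrite lerD2r X_mono.
have hd := d_le_delta a l.
have wl := hw (tau l).
move: hzc hl; rewrite /ctilde.
case: (leqP a b) => hab.
  case: ifP => hlj => hzc hl; rewrite hbt in hzc.
    kn hl; kn hab; kn hbt; kn hlj; have hlt := leq_trans hlj hbt; kn hlt; lra.
  have hbl : (b <= l)%N by apply: ltnW; rewrite ltnNge hlj.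
  have hal := leq_trans hab hbl.
  kn hal; kn hab; kn hbt; kn hbl; dc l t'; lra.
have hba := ltnW hab.
have c1 := deltaC a b; have c2 := deltaC a l.
case: ifP => hlj; case: ifP => hjt => hzc hl.
- kn hba; kn hl; kn hbt; kn hlj; kn hjt; dc l t'; lra.
- kn hba; kn hl; kn hbt; kn hlj; dc l t'; lra.
- have hal : (a <= l)%N by apply: ltnW; rewrite ltnNge hlj.
  kn hba; kn hbt; kn hal; kn hjt; dc l t'; lra.
- have hal : (a <= l)%N by apply: ltnW; rewrite ltnNge hlj.
  kn hba; kn hbt; kn hal; dc l t'; lra.
Qed.

Definition tp (j0 : nat) (ts : seq nat) (i : nat) : nat :=
  if i is i'.+1 then nth 0%N ts i' else j0.

Lemma tpS j j1 ts i : tp j (j1 :: ts) i.+1 = tp j1 ts i.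
Proof. by case: i. Qed.

Lemma run_gen j rho ws ts P : fta_run d tau j rho ws ts P -> 0 <= rho <= edge d tau j ->
  (forall i s, (i < size ws)%N -> 0 <= (nth (fun _ => 0) ws i) s) ->
  forall l : nat -> nat,
  (forall i, (i < size ws)%N ->
     ftt_choice d tau (nth (fun _ => 0) ws i) (l i) (tp j ts i) (l i.+1)) ->
  (j <= tp j ts (size ws))%N /\
  \sum_(i < size ws) (d (tau (l i)) (tau (l i.+1)) + (nth (fun _ => 0) ws i) (tau (l i.+1)))
    + delta d tau (l (size ws)) (tp j ts (size ws))
  <= delta d tau (l 0%N) j + 2 * (P + delta d tau j (tp j ts (size ws))).
Proof.
elim=> {j rho ws ts P}.
  move=> j rho _ _ l _ /=; split => //.
  by rewrite big_ord0 add0r (deltaE _ _ (leqnn j)) subrr addr0 mulr0 addr0.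
move=> j rho w ws c j1 rho1 ts P hloop hrun IH hr hws l hch.
have hw : forall s, 0 <= w s by move=> s; apply: (hws 0%N).
case: (loop_prop _ _ _ _ _ _ _ hloop hw ler01 hr) => hjj1 hr1 hb.
have hws' : forall i s, (i < size ws)%N -> 0 <= (nth (fun _ => 0) ws i) s.
  by move=> i s hi; apply: (hws i.+1).
have hch' : forall i, (i < size ws)%N ->
    ftt_choice d tau (nth (fun _ => 0) ws i) (l i.+1) (tp j1 ts i) (l i.+2).
  by move=> i hi; rewrite -(tpS j); apply: (hch i.+1).
case: (IH hr1 hws' (fun i => l i.+1) hch') => /= hfin hI.
have hb1 : forall z K, (forall k, (j <= k <= j1)%N -> z <= w (tau k) + K) -> z <= c + K.
  by move=> z K hz; have := hb z K hz; rewrite !mul1r.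
have hs := step _ _ _ _ _ _ hw hjj1 hb1 (hch 0%N erefl).
have -> : nth 0%N (j1 :: ts) (size ws) = tp j1 ts (size ws) by case: (size ws).
split; first exact: leq_trans hfin.
rewrite big_ord_recl /=.
have e1 := deltaE _ _ hjj1; have e2 := deltaE _ _ hfin.
have e3 := deltaE _ _ (leq_trans hjj1 hfin).
rewrite (eq_bigr (fun i : 'I_(size ws) => d (tau (l i.+1)) (tau (l i.+2)) +
   nth (fun=> 0) ws i (tau (l i.+2)))); last by move=> i _; rewrite /bump /= add1n.
lra.
Qed.
End Proof.

Theorem theorem2 (R : realFieldType) (m : nat) (d : 'I_m -> 'I_m -> R)
  (tau : nat -> 'I_m) (ws : seq (task R m)) (ts : seq nat) (P : R)
  (l : nat -> nat) :
  is_metric d ->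
  (forall i s, (i < size ws)%N -> 0 <= (nth (fun _ => 0) ws i) s) ->
  fta_run d tau 1%N 0 ws ts P ->
  l 0%N = 1%N ->
  (forall i, (i < size ws)%N ->
     ftt_choice d tau (nth (fun _ => 0) ws i) (l i) (tpos ts i) (l i.+1)) ->
  ftt_cost d tau ws l <= 2 * (P + delta d tau 1%N (tpos ts (size ws))).
Proof.
move=> Hm hws hrun hl0 hch.
have hr : (0:R) <= 0 <= edge d tau 1%N.
  by apply/andP; split => //; apply: edge_ge0.
have hch' : forall i, (i < size ws)%N ->
    ftt_choice d tau (nth (fun _ => 0) ws i) (l i) (tp 1 ts i) (l i.+1).
  by move=> i hi; have := hch i hi; case: i hi.
case: (@run_gen R m d tau Hm _ _ _ _ _ hrun hr hws l hch') => _ H.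
have e0 : delta d tau 1%N 1%N = 0 by rewrite deltaE // subrr.
have e : tpos ts (size ws) = tp 1 ts (size ws) by case: (size ws).
rewrite e /ftt_cost; rewrite hl0 e0 add0r in H.
have : 0 <= delta d tau (l (size ws)) (tp 1 ts (size ws)) by apply: delta_ge0.
move=> h0; lra.
Qed.
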